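(* Let $(X,d)$ be a compact metric space and let $f\colon X\to X$ be a continuous map with the limit shadowing property. Then $CR(f)=\Omega(f)=\overline{M(f)}$, and the restriction $f|_{\Omega(f)}\colon\Omega(f)\to\Omega(f)$ has the shadowing property.
   Context: A sequence $(x_i)_{i\ge0}$ in $X$ is a $\delta$-pseudo orbit of $f$ if $d(f(x_i),x_{i+1})\le\delta$ for all $i\ge0$; it is $\epsilon$-shadowed by $x\in X$ if $d(x_i,f^i(x))\le\epsilon$ for all $i\ge0$. $f$ has the shadowing property if for every $\epsilon>0$ there is $\delta>0$ such that every $\delta$-pseudo orbit of $f$ is $\epsilon$-shadowed by some point of $X$. A sequence $(x_i)_{i\ge0}$ is a limit pseudo orbit of $f$ if $\lim_{i\to\infty}d(f(x_i),x_{i+1})=0$; $f$ has the limit shadowing property if for every limit pseudo orbit $(x_i)_{i\ge0}$ there is $y\in X$ with $\lim_{i\to\infty}d(x_i,f^i(y))=0$. A finite sequence $(x_i)_{i=0}^k$ ($k\ge1$) is a $\delta$-chain if $d(f(x_i),x_{i+1})\le\delta$ for $0\le i\le k-1$, and a $\delta$-cycle if moreover $x_0=x_k$. $x$ is chain recurrent if for every $\delta>0$ there is a $\delta$-cycle with $x_0=x_k=x$; $CR(f)$ is the set of chain recurrent points. $x$ is minimal if $f$ restricted to the orbit closure $\overline{\{f^n(x):n\ge0\}}$ is minimal; $M(f)$ is the set of minimal points. $x$ is non-wandering if for every neighborhood $U$ of $x$ there is $n>0$ with $f^n(U)\cap U\ne\emptyset$; $\Omega(f)$ is the set of non-wandering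 points. *)

(* Defs.v *)
From Stdlib Require Import Reals List.
Open Scope R_scope.

Section Dyn.
Context {X : Type} (d : X -> X -> R).

Definition is_metric : Prop :=
  (forall x y, 0 <= d x y) /\ (forall x y, d x y = 0 <-> x = y) /\
  (forall x y, d x y = d y x) /\ (forall x y z, d x z <= d x y + d y z).

Definition is_open (U : X -> Prop) : Prop :=
  forall x, U x -> exists r, 0 < r /\ forall y, d x y < r -> U y.

Definition is_closed (A : X -> Prop) : Prop := is_open (fun x => ~ A x).

Definition compact_space : Prop :=
  forall (I : Type) (U : I -> X -> Prop),
    (forall i, is_open (U i)) -> (forall x, exists i, U i x) ->
    exists l : list I, forall x, exists i, In i l /\ U i x.

Definition closure (A : X -> Prop) (x : X) : Prop :=
  forall eps, 0 < eps -> exists y, A y /\ d x y < eps.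

Definition continuous_map (f : X -> X) : Prop :=
  forall x eps, 0 < eps -> exists delta, 0 < delta /\
    forall y, d x y < delta -> d (f x) (f y) < eps.

Variable f : X -> X.

Definition pseudo_orbit (delta : R) (xs : nat -> X) : Prop :=
  forall i, d (f (xs i)) (xs (S i)) <= delta.

Definition shadows (eps : R) (xs : nat -> X) (x : X) : Prop :=
  forall i, d (xs i) (Nat.iter i f x) <= eps.

(* shadowing property of the restriction of f to a subset S
   (subspace with induced metric; pseudo orbits in S, shadowing points in S) *)
Definition shadowing_on (S : X -> Prop) : Prop :=
  forall eps, 0 < eps -> exists delta, 0 < delta /\
    forall xs, (forall i, S (xs i)) -> pseudo_orbit delta xs ->
      exists x, S x /\ shadows eps xs x.

Definition limit_pseudo_orbit (xs : nat -> X) : Prop :=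
  Un_cv (fun i => d (f (xs i)) (xs (S i))) 0.

Definition limit_shadowing : Prop :=
  forall xs, limit_pseudo_orbit xs ->
    exists y, Un_cv (fun i => d (xs i) (Nat.iter i f y)) 0.

Definition chain_recurrent (x : X) : Prop :=
  forall delta, 0 < delta ->
    exists (k : nat) (xs : nat -> X), (1 <= k)%nat /\ xs 0%nat = x /\ xs k = x /\
      forall i, (i < k)%nat -> d (f (xs i)) (xs (S i)) <= delta.

Definition orbit_closure (x : X) : X -> Prop :=
  closure (fun y => exists n, y = Nat.iter n f x).

Definition minimal_on (K : X -> Prop) : Prop :=
  forall A : X -> Prop, (exists y, A y) -> is_closed A ->
    (forall y, A y -> K y) -> (forall y, A y -> A (f y)) ->
    forall y, K y -> A y.

Definition minimal_point (x : X) : Prop := minimal_on (orbit_closure x).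

Definition nonwandering (x : X) : Prop :=
  forall U : X -> Prop, is_open U -> U x ->
    exists (n : nat) (y : X), (0 < n)%nat /\ U y /\ U (Nat.iter n f y).

End Dyn.

(* Main.v *)
Require Import Defs.
From Stdlib Require Import Reals.
From Stdlib Require Import Lra Lia List.
From Stdlib Require Import ClassicalEpsilon Classical.
Open Scope R_scope.


Lemma my_choice {A B : Type} (P : A -> B -> Prop) :
  (forall a, exists b, P a b) -> exists g : A -> B, forall a, P a (g a).
Proof.
  intros H. exists (fun a => proj1_sig (constructive_indefinite_description _ (H a))).
  intro a. exact (proj2_sig (constructive_indefinite_description _ (H a))).
Qed.

Lemma inv_small (eps : R) : 0 < eps -> exists N, forall m, (N <= m)%nat -> / (INR m + 1) < eps.
Proof.
  intros He. destruct (INR_unbounded (/ eps)) as [N HN].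
  exists N. intros m Hm. apply le_INR in Hm.
  assert (0 < INR m + 1) by (pose proof (pos_INR m); lra).
  assert (/eps < INR m + 1) by lra.
  apply Rinv_lt_contravar in H0; [|apply Rmult_lt_0_compat; [apply Rinv_0_lt_compat|]; lra].
  rewrite Rinv_inv in H0. lra.
Qed.

Lemma inv_pos (m : nat) : 0 < / (INR m + 1).
Proof. apply Rinv_0_lt_compat. pose proof (pos_INR m). lra. Qed.

Lemma inv_le (m n : nat) : (m <= n)%nat -> / (INR n + 1) <= / (INR m + 1).
Proof.
  intros H. apply le_INR in H. pose proof (pos_INR m). apply Rinv_le_contravar; lra.
Qed.

Section Basics.
Context {X : Type} (d : X -> X -> R) (f : X -> X) (Hmet : is_metric d).

Lemma d_pos x y : 0 <= d x y. Proof. apply Hmet. Qed.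
Lemma d_xx x : d x x = 0. Proof. apply (proj1 (proj2 Hmet)). reflexivity. Qed.
Lemma d_sym x y : d x y = d y x. Proof. apply Hmet. Qed.
Lemma d_tri x y z : d x z <= d x y + d y z. Proof. apply Hmet. Qed.

Lemma ball_open c r : is_open d (fun y => d c y < r).
Proof.
  intros x Hx. exists (r - d c x). split; [lra|]. intros y Hy.
  pose proof (d_tri c x y). lra.
Qed.

Lemma iter_cont (Hc : continuous_map d f) :
  forall n x eps, 0 < eps -> exists del, 0 < del /\
    forall y, d x y < del -> d (Nat.iter n f x) (Nat.iter n f y) < eps.
Proof.
  induction n; intros x eps He.
  - exists eps. split; auto.
  - simpl. destruct (Hc (Nat.iter n f x) eps He) as [d1 [Hd1 H1]].
    destruct (IHn x d1 Hd1) as [d2 [Hd2 H2]].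
    exists d2. split; auto.
Qed.

Definition cluster (s : nat -> X) (w : X) : Prop :=
  forall eps, 0 < eps -> forall N, exists n, (N <= n)%nat /\ d (s n) w < eps.

Lemma cluster_exists (Hcpt : compact_space d) (s : nat -> X) : exists w, cluster s w.
Proof.
  apply NNPP. intro Hno.
  assert (H : forall w, exists p : R * nat, 0 < fst p /\ forall n, (snd p <= n)%nat -> fst p <= d (s n) w).
  { intro w. apply NNPP. intro Hw. apply Hno. exists w. intros eps He N.
    apply NNPP. intro Hn. apply Hw. exists (eps, N). simpl. split; auto.
    intros n Hn'. apply Rnot_lt_le. intro Hl. apply Hn. exists n. auto. }
  apply my_choice in H. destruct H as [g Hg].
  destruct (Hcpt X (fun w y => d w y < fst (g w))) as [l Hl].
  - intro w. apply ball_open.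
  - intro x. exists x. rewrite d_xx. apply Hg.
  - set (M := fold_right (fun w acc => Nat.max (snd (g w)) acc) 0%nat l).
    assert (HM : forall w, In w l -> (snd (g w) <= M)%nat).
    { unfold M. clear. induction l; simpl; intros w Hw; [contradiction|].
      destruct Hw as [<-|Hw]; [lia|]. specialize (IHl w Hw). lia. }
    destruct (Hl (s M)) as [w [Hin Hw]].
    pose proof (proj2 (Hg w) M (HM w Hin)). rewrite d_sym in Hw. lra.
Qed.

Lemma cluster_limit (s : nat -> X) w (g : X -> X) a eps n0 :
  cluster s w ->
  (forall e, 0 < e -> exists del, 0 < del /\ forall y, d w y < del -> d (g w) (g y) < e) ->
  (forall n, (n0 <= n)%nat -> d a (g (s n)) <= eps) -> d a (g w) <= eps.
Proof.
  intros Hcl Hg Hb. apply Rnot_lt_le. intro Hlt.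
  set (e := (d a (g w) - eps) / 2).
  assert (He : 0 < e) by (unfold e; lra).
  destruct (Hg e He) as [del [Hdel H]].
  destruct (Hcl del Hdel n0) as [n [Hn Hd]].
  rewrite d_sym in Hd. specialize (H _ Hd). specialize (Hb n Hn).
  pose proof (d_tri a (g (s n)) (g w)). rewrite (d_sym (g (s n))) in H0.
  unfold e in H. lra.
Qed.

Lemma closed_cluster (A : X -> Prop) s w n0 :
  is_closed d A -> cluster s w -> (forall n, (n0 <= n)%nat -> A (s n)) -> A w.
Proof.
  intros HA Hcl Hs. apply NNPP. intro Hw.
  destruct (HA w Hw) as [r [Hr H]].
  destruct (Hcl r Hr n0) as [n [Hn Hd]]. rewrite d_sym in Hd.
  apply (H _ Hd). auto.
Qed.

Lemma unif_cont (Hcpt : compact_space d) (Hc : continuous_map d f) :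
  forall eps, 0 < eps -> exists rho, 0 < rho /\ forall a b, d a b < rho -> d (f a) (f b) < eps.
Proof.
  intros eps He. apply NNPP. intro Hno.
  assert (H : forall n : nat, exists ab : X * X, d (fst ab) (snd ab) < / (INR n + 1) /\
             eps <= d (f (fst ab)) (f (snd ab))).
  { intro n. apply NNPP. intro Hn. apply Hno. exists (/ (INR n + 1)). split; [apply inv_pos|].
    intros a b Hab. apply Rnot_le_lt. intro Hle. apply Hn. exists (a, b). simpl. auto. }
  apply my_choice in H. destruct H as [g Hg].
  destruct (cluster_exists Hcpt (fun n => fst (g n))) as [w Hw].
  destruct (Hc w (eps/2) ltac:(lra)) as [r [Hr Hwr]].
  destruct (inv_small (r/2) ltac:(lra)) as [N HN].
  destruct (Hw (r/2) ltac:(lra) N) as [n [Hn Hd]].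
  specialize (Hg n). destruct Hg as [H1 H2]. specialize (HN n Hn).
  assert (d w (fst (g n)) < r) by (rewrite d_sym; lra).
  assert (d w (snd (g n)) < r).
  { pose proof (d_tri w (fst (g n)) (snd (g n))). rewrite d_sym in Hd. lra. }
  apply Hwr in H. apply Hwr in H0.
  pose proof (d_tri (f (fst (g n))) (f w) (f (snd (g n)))). rewrite (d_sym _ (f w)) in H3. lra.
Qed.

Lemma closure_closed (A : X -> Prop) : is_closed d (closure d A).
Proof.
  intros x Hx. unfold closure in Hx. apply not_all_ex_not in Hx. destruct Hx as [eps Hx].
  apply imply_to_and in Hx. destruct Hx as [He Hx].
  exists (eps/2). split; [lra|]. intros y Hy Hcy.
  destruct (Hcy (eps/2) ltac:(lra)) as [z [Hz Hyz]]. apply Hx. exists z. split; auto.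
  pose proof (d_tri x y z). lra.
Qed.

Lemma closed_closure (A : X -> Prop) x : is_closed d A -> closure d A x -> A x.
Proof.
  intros HA Hx. apply NNPP. intro Hn. destruct (HA x Hn) as [r [Hr H]].
  destruct (Hx r Hr) as [y [Hy Hxy]]. exact (H y Hxy Hy).
Qed.

End Basics.

Section Concat.
Context {X : Type} (L : nat -> nat) (b : nat -> nat -> X).

Fixpoint loc (i : nat) : nat * nat :=
  match i with
  | O => (O, O)
  | S i => let p := loc i in
           if Nat.ltb (S (snd p)) (L (fst p)) then (fst p, S (snd p)) else (S (fst p), O)
  end.

Fixpoint Tsum (k : nat) : nat := match k with O => O | S k => (Tsum k + L k)%nat end.

Definition cat (i : nat) : X := b (fst (loc i)) (snd (loc i)).

Hypothesis HL : forall k, (1 <= L k)%nat.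

Lemma loc_S i : loc (S i) = (if Nat.ltb (S (snd (loc i))) (L (fst (loc i)))
   then (fst (loc i), S (snd (loc i))) else (S (fst (loc i)), O)).
Proof. reflexivity. Qed.

Lemma loc_inv i : (snd (loc i) < L (fst (loc i)))%nat /\ i = (Tsum (fst (loc i)) + snd (loc i))%nat.
Proof.
  induction i as [|i [IH1 IH2]].
  - simpl. specialize (HL 0). lia.
  - simpl. destruct (Nat.ltb (S (snd (loc i))) (L (fst (loc i)))) eqn:E.
    + apply Nat.ltb_lt in E. simpl. lia.
    + apply Nat.ltb_ge in E. simpl. specialize (HL (S (fst (loc i)))). lia.
Qed.

Lemma loc_T k o : (o < L k)%nat -> loc (Tsum k + o) = (k, o).
Proof.
  revert o. induction k as [|k IHk]; intros o Ho.
  - induction o as [|o IHo]; [reflexivity|].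
    simpl. simpl in IHo. rewrite IHo by lia. simpl.
    destruct (Nat.ltb (S o) (L 0)) eqn:E; [reflexivity|]. apply Nat.ltb_ge in E. lia.
  - induction o as [|o IHo].
    + simpl. replace (Tsum k + L k + 0)%nat with (S (Tsum k + (L k - 1)))%nat
        by (specialize (HL k); lia).
      simpl. rewrite IHk by (specialize (HL k); lia). simpl.
      destruct (Nat.ltb (S (L k - 1)) (L k)) eqn:E; [apply Nat.ltb_lt in E; specialize (HL k); lia|].
      reflexivity.
    + replace (Tsum (S k) + S o)%nat with (S (Tsum (S k) + o)) by lia.
      rewrite loc_S, IHo by lia. simpl.
      destruct (Nat.ltb (S o) (L (S k))) eqn:E; [reflexivity|]. apply Nat.ltb_ge in E. lia.
Qed.

Lemma cat_T k o : (o < L k)%nat -> cat (Tsum k + o) = b k o.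
Proof. intro H. unfold cat. rewrite loc_T by auto. reflexivity. Qed.

Lemma Tsum_ge k : (k <= Tsum k)%nat.
Proof. induction k; simpl; [lia|]. specialize (HL k). lia. Qed.

Lemma Tsum_mono k1 k2 : (k1 <= k2)%nat -> (Tsum k1 <= Tsum k2)%nat.
Proof. induction 1; simpl; lia. Qed.

Lemma loc_large K i : (Tsum K <= i)%nat -> (K <= fst (loc i))%nat.
Proof.
  intros Hi. destruct (loc_inv i) as [H1 H2].
  destruct (Nat.le_gt_cases K (fst (loc i))) as [|Hlt]; auto.
  assert (Tsum (S (fst (loc i))) <= Tsum K)%nat by (apply Tsum_mono; lia).
  simpl in H. lia.
Qed.

Variable d : X -> X -> R.
Variable f : X -> X.
Variable E : nat -> R.
Hypothesis Hint : forall k o, (S o < L k)%nat -> d (f (b k o)) (b k (S o)) <= E k.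
Hypothesis Hjun : forall k, d (f (b k (L k - 1))) (b (S k) 0) <= E k.

Lemma cat_err i : d (f (cat i)) (cat (S i)) <= E (fst (loc i)).
Proof.
  unfold cat. destruct (loc_inv i) as [H1 H2]. simpl loc.
  destruct (Nat.ltb (S (snd (loc i))) (L (fst (loc i)))) eqn:Eq.
  - apply Nat.ltb_lt in Eq. simpl. apply Hint. auto.
  - apply Nat.ltb_ge in Eq. simpl. replace (snd (loc i)) with (L (fst (loc i)) - 1)%nat by lia.
    apply Hjun.
Qed.

Lemma cat_pseudo del : (forall k, E k <= del) -> pseudo_orbit d f del cat.
Proof. intros H i. eapply Rle_trans; [apply cat_err|apply H]. Qed.

Lemma cat_limit : (forall eps, 0 < eps -> exists K, forall k, (K <= k)%nat -> E k < eps) ->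
  (forall x y, 0 <= d x y) -> limit_pseudo_orbit d f cat.
Proof.
  intros HE Hpos eps He. destruct (HE eps He) as [K HK]. exists (Tsum K). intros n Hn.
  unfold Rdist. pose proof (cat_err n).
  assert (0 <= d (f (cat n)) (cat (S n))) by apply Hpos.
  rewrite Rminus_0_r, Rabs_pos_eq by auto.
  eapply Rle_lt_trans; [apply H|]. apply HK. apply loc_large. auto.
Qed.

End Concat.

Section Dyn.
Context {X : Type} (d : X -> X -> R) (f : X -> X) (Hmet : is_metric d)
  (Hcpt : compact_space d) (Hcont : continuous_map d f) (Hls : limit_shadowing d f).

Lemma Rdist_small a r : 0 <= a -> Rdist a 0 < r -> a < r.
Proof. intros H1 H2. unfold Rdist in H2. rewrite Rminus_0_r, Rabs_pos_eq in H2; auto. Qed.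

Lemma nw_cr x : nonwandering d f x -> chain_recurrent d f x.
Proof.
  intros Hnw del Hdel.
  destruct (Hcont x (del/2) ltac:(lra)) as [rho [Hrho Hc]].
  set (r := Rmin rho (del/2)).
  assert (Hr : 0 < r) by (unfold r; apply Rmin_glb_lt; lra).
  destruct (Hnw (fun y => d x y < r) (ball_open d Hmet x r)) as [n [y [Hn [Hy Hny]]]].
  { rewrite (d_xx d Hmet). auto. }
  exists n, (fun i => if Nat.eqb i 0 then x else if Nat.eqb i n then x else Nat.iter i f y).
  split; [lia|]. split; [reflexivity|]. split.
  { destruct (Nat.eqb n 0) eqn:E; [reflexivity|]. rewrite Nat.eqb_refl. reflexivity. }
  intros i Hi.
  assert (Hrr : r <= rho /\ r <= del/2) by (unfold r; split; [apply Rmin_l|apply Rmin_r]).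
  assert (Hfy : d (f x) (f y) < del/2) by (apply Hc; lra).
  destruct (Nat.eqb i 0) eqn:E0.
  - apply Nat.eqb_eq in E0. subst i. simpl.
    destruct n as [|[|n']]; [lia| |].
    + simpl in Hny.
      pose proof (d_tri d Hmet (f x) (f y) x). rewrite (d_sym d Hmet (f y) x) in H. lra.
    + simpl. lra.
  - destruct (Nat.eqb i n) eqn:E1; [apply Nat.eqb_eq in E1; lia|].
    assert (ES : Nat.eqb (S i) 0 = false) by reflexivity. rewrite ES.
    destruct (Nat.eqb (S i) n) eqn:E2.
    + apply Nat.eqb_eq in E2. rewrite <- E2 in Hny. simpl in Hny. simpl.
      rewrite (d_sym d Hmet). lra.
    + simpl. rewrite (d_xx d Hmet). lra.
Qed.

Lemma cr_nw x : chain_recurrent d f x -> nonwandering d f x.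
Proof.
  intros Hcr U HU Ux. destruct (HU x Ux) as [r [Hr Hball]].
  assert (H : forall k : nat, exists pw : nat * (nat -> X), (1 <= fst pw)%nat /\ snd pw 0%nat = x /\
     snd pw (fst pw) = x /\ forall i, (i < fst pw)%nat -> d (f (snd pw i)) (snd pw (S i)) <= / (INR k + 1)).
  { intro k. destruct (Hcr (/ (INR k + 1)) (inv_pos k)) as [p [w [H1 [H2 [H3 H4]]]]].
    exists (p, w). simpl. auto. }
  apply my_choice in H. destruct H as [g Hg].
  set (L := fun k => fst (g k)). set (b := fun k => snd (g k)).
  assert (HL : forall k, (1 <= L k)%nat) by (intro k; apply Hg).
  assert (Hlim : limit_pseudo_orbit d f (cat L b)).
  { apply (cat_limit L b HL d f (fun k => / (INR k + 1))).
    - intros k o Ho. apply (Hg k). unfold L in Ho. lia.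
    - intros k. destruct (Hg k) as [H1 [H2 [H3 H4]]]. unfold b, L. cbv beta.
      rewrite (proj1 (proj2 (Hg (S k)))).
      pose proof (H4 (fst (g k) - 1)%nat ltac:(lia)) as H5.
      replace (S (fst (g k) - 1)) with (fst (g k)) in H5 by lia. rewrite H3 in H5. exact H5.
    - intros eps He. destruct (inv_small eps He) as [N HN]. exists N. auto.
    - apply Hmet. }
  destruct (Hls _ Hlim) as [y Hy].
  destruct (Hy r Hr) as [N HN].
  assert (Hx : forall k, cat L b (Tsum L k) = x).
  { intro k. replace (Tsum L k) with (Tsum L k + 0)%nat by lia. rewrite cat_T by auto.
    apply Hg. }
  pose proof (Tsum_ge L HL N) as HT.
  assert (A1 : d x (Nat.iter (Tsum L N) f y) < r).
  { rewrite <- (Hx N) at 1. apply Rdist_small; [apply Hmet|]. apply HN. lia. }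
  assert (A2 : d x (Nat.iter (Tsum L (S N)) f y) < r).
  { rewrite <- (Hx (S N)) at 1. apply Rdist_small; [apply Hmet|]. apply HN. simpl. lia. }
  exists (L N), (Nat.iter (Tsum L N) f y). split; [apply HL|]. split; [auto|].
  rewrite <- Nat.iter_add. apply Hball. simpl in A2. rewrite Nat.add_comm. auto.
Qed.

Lemma iter_S_r n x : Nat.iter (S n) f x = Nat.iter n f (f x).
Proof. replace (S n) with (n + 1)%nat by lia. rewrite Nat.iter_add. reflexivity. Qed.

Lemma min_nw x : minimal_point d f x -> nonwandering d f x.
Proof.
  intros Hm U HU Ux. destruct (HU x Ux) as [r [Hr Hball]].
  set (A := orbit_closure d f (f x)).
  assert (Hx : A x).
  { apply (Hm A).
    - exists (f x). intros eps He. exists (f x). split; [exists 0%nat; reflexivity|]. rewrite (d_xx d Hmet); auto.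
    - apply closure_closed. auto.
    - intros y Hy eps He. destruct (Hy eps He) as [z [[n ->] Hz]]. exists (Nat.iter (S n) f x).
      split; [exists (S n); auto|]. rewrite iter_S_r. auto.
    - intros y Hy eps He. destruct (Hcont y eps He) as [rho [Hrho Hc]].
      destruct (Hy rho Hrho) as [z [[n ->] Hz]]. exists (Nat.iter (S n) f (f x)).
      split; [exists (S n); auto|]. simpl. apply Hc. auto.
    - intros eps He. exists x. split; [exists 0%nat; auto|]. rewrite (d_xx d Hmet). auto. }
  destruct (Hx r Hr) as [z [[n ->] Hz]].
  exists (S n), x. split; [lia|]. split; auto. rewrite iter_S_r. auto.
Qed.

Lemma nw_closure x : closure d (nonwandering d f) x -> nonwandering d f x.
Proof.
  intros Hx U HU Ux. destruct (HU x Ux) as [r [Hr Hball]].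
  destruct (Hx r Hr) as [y [Hy Hxy]]. apply Hy; auto.
Qed.

End Dyn.

Section Per.
Context {X : Type} (d : X -> X -> R) (f : X -> X) (Hmet : is_metric d)
  (Hcpt : compact_space d) (Hcont : continuous_map d f) (Hls : limit_shadowing d f).

Definition cyc (c : nat -> X) (p : nat) : nat -> X := cat (fun _ => p) (fun _ => c).

Lemma Tsum_const p k : Tsum (fun _ => p) k = (k * p)%nat.
Proof. induction k; simpl; lia. Qed.

Lemma cyc_at c p j o : (1 <= p)%nat -> (o < p)%nat -> cyc c p (j * p + o) = c o.
Proof.
  intros Hp Ho. unfold cyc. rewrite <- Tsum_const. apply (cat_T (fun _ => p) (fun _ => c)); auto.
Qed.

Lemma cyc_mult c p j : (1 <= p)%nat -> cyc c p (j * p) = c 0%nat.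
Proof. intros Hp. rewrite <- (Nat.add_0_r (j * p)). apply cyc_at; lia. Qed.

Definition cchain (del : R) (c : nat -> X) (p : nat) : Prop :=
  forall i, (i < p)%nat -> d (f (c i)) (c (S i)) <= del.

Lemma cyc_pseudo c p del : (1 <= p)%nat -> c p = c 0%nat -> cchain del c p ->
  pseudo_orbit d f del (cyc c p).
Proof.
  intros Hp Hc Hch. unfold cyc. apply (cat_pseudo (fun _ => p) (fun _ => c)) with (E := fun _ => del).
  - auto.
  - intros k o Ho. apply Hch. lia.
  - intros k. rewrite <- Hc. pose proof (Hch (p - 1)%nat ltac:(lia)).
    replace (S (p - 1)) with p in H by lia. auto.
  - intros; lra.
Qed.

Lemma per_shadow : forall eps, 0 < eps -> exists del, 0 < del /\
  forall c p, (1 <= p)%nat -> c p = c 0%nat -> cchain del c p ->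
    exists z, forall i, d (cyc c p i) (Nat.iter i f z) <= eps.
Proof.
  intros eps He. apply NNPP. intro Hno.
  assert (HG : forall m : nat, exists t : (nat -> X) * nat * nat,
    (1 <= snd (fst t))%nat /\ fst (fst t) (snd (fst t)) = fst (fst t) 0%nat /\
    cchain (/ (INR m + 1)) (fst (fst t)) (snd (fst t)) /\
    forall z, exists i, (i <= snd t)%nat /\
      eps / 2 < d (cyc (fst (fst t)) (snd (fst t)) i) (Nat.iter i f z)).
  { intro m. apply NNPP. intro Hm. apply Hno. exists (/ (INR m + 1)). split; [apply inv_pos|].
    intros c p Hp Hc Hch. apply NNPP. intro Hz.
    assert (HN : forall N, exists z, forall i, (i <= N)%nat -> d (cyc c p i) (Nat.iter i f z) <= eps / 2).
    { intro N. apply NNPP. intro HN. apply Hm. exists (c, p, N). simpl. split; [auto|]. split; [auto|].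
      split; [auto|]. intro z. apply NNPP. intro Hi. apply HN. exists z. intros i Hi'.
      apply Rnot_lt_le. intro Hl. apply Hi. exists i. auto. }
    apply my_choice in HN. destruct HN as [zs Hzs].
    destruct (cluster_exists d Hmet Hcpt zs) as [w Hw].
    apply Hz. exists w. intro i.
    assert (d (cyc c p i) (Nat.iter i f w) <= eps / 2).
    { apply (cluster_limit d Hmet zs w (Nat.iter i f) (cyc c p i) (eps/2) i Hw).
      - intros e He'. apply (iter_cont d f Hcont i w e He').
      - intros n Hn. apply Hzs. auto. }
    lra. }
  apply my_choice in HG. destruct HG as [G HG].
  set (c := fun m => fst (fst (G m))). set (p := fun m => snd (fst (G m))). set (N := fun m => snd (G m)).
  destruct (cluster_exists d Hmet Hcpt (fun m => c m 0%nat)) as [q Hq].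
  assert (Hsel : forall kn : nat * nat, exists n, (snd kn <= n)%nat /\ d (c n 0%nat) q < / (INR (fst kn) + 1)).
  { intros [k n]. simpl. apply (Hq _ (inv_pos k) n). }
  apply my_choice in Hsel. destruct Hsel as [gsel Hsel].
  set (msub := fix msub (k : nat) : nat := match k with O => gsel (0, 0)%nat | S k => gsel (S k, S (msub k)) end).
  assert (Hms : forall k, (k <= msub k)%nat /\ d (c (msub k) 0%nat) q < / (INR k + 1)).
  { induction k.
    - simpl. split; [lia|]. apply (Hsel (0, 0)%nat).
    - simpl. pose proof (Hsel (S k, S (msub k))) as [H1 H2]. simpl in H1, H2. split; [lia|auto]. }
  set (L := fun k => (p (msub k) * (N (msub k) + 1))%nat).
  set (b := fun k => cyc (c (msub k)) (p (msub k))).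
  assert (Hp : forall m, (1 <= p m)%nat) by (intro m; apply (HG m)).
  assert (HL : forall k, (1 <= L k)%nat) by (intro k; unfold L; specialize (Hp (msub k)); nia).
  assert (Hps : forall k, pseudo_orbit d f (/ (INR k + 1)) (b k)).
  { intro k. intros i. eapply Rle_trans.
    - destruct (HG (msub k)) as [A1 [A2 [A3 _]]]. exact (cyc_pseudo _ _ _ A1 A2 A3 i).
    - apply inv_le. apply Hms. }
  assert (Hlim : limit_pseudo_orbit d f (cat L b)).
  { apply (cat_limit L b HL d f (fun k => 3 * / (INR k + 1))).
    - intros k o Ho. pose proof (Hps k o). pose proof (inv_pos k). lra.
    - intros k.
      assert (E1 : b k (L k) = c (msub k) 0%nat).
      { unfold b, L. rewrite Nat.mul_comm. apply cyc_mult. auto. }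
      assert (E2 : b (S k) 0%nat = c (msub (S k)) 0%nat).
      { unfold b. apply (cyc_mult _ _ 0). auto. }
      pose proof (Hps k (L k - 1)%nat) as H1. replace (S (L k - 1)) with (L k) in H1 by (specialize (HL k); lia).
      rewrite E1 in H1. rewrite E2.
      pose proof (proj2 (Hms k)). pose proof (proj2 (Hms (S k))).
      pose proof (inv_le k (S k) ltac:(lia)).
      pose proof (d_tri d Hmet (f (b k (L k - 1)%nat)) (c (msub k) 0%nat) q).
      pose proof (d_tri d Hmet (f (b k (L k - 1)%nat)) q (c (msub (S k)) 0%nat)).
      rewrite (d_sym d Hmet q) in H4. lra.
    - intros e He'. destruct (inv_small (e/3) ltac:(lra)) as [K HK]. exists K. intros k Hk.
      specialize (HK k Hk). lra.
    - apply Hmet. }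
  destruct (Hls _ Hlim) as [y Hy].
  destruct (Hy (eps/2) ltac:(lra)) as [I HI].
  destruct (proj2 (proj2 (proj2 (HG (msub I)))) (Nat.iter (Tsum L I) f y)) as [i [Hi Hd]].
  fold (c (msub I)) (p (msub I)) (N (msub I)) in Hi, Hd.
  assert (Hi' : (i < L I)%nat) by (unfold L; specialize (Hp (msub I)); nia).
  pose proof (cat_T L b HL I i Hi') as Hc.
  pose proof (HI (Tsum L I + i)%nat ltac:(pose proof (Tsum_ge L HL I); lia)) as H.
  apply Rdist_small in H; [|apply Hmet]. rewrite Hc in H. unfold b in H.
  rewrite Nat.add_comm, Nat.iter_add in H. lra.
Qed.

End Per.

Section Minimal.
Context {X : Type} (d : X -> X -> R) (f : X -> X) (Hmet : is_metric d)
  (Hcpt : compact_space d).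

Definition good (A : X -> Prop) : Prop :=
  (exists y, A y) /\ is_closed d A /\ (forall y, A y -> A (f y)).
Definition subs (A B : X -> Prop) : Prop := forall y, A y -> B y.

Definition shrink (K B : X -> Prop) : X -> Prop :=
  match excluded_middle_informative (exists A, good A /\ subs A K /\ forall y, A y -> ~ B y) with
  | left h => proj1_sig (constructive_indefinite_description _ h)
  | right _ => K
  end.

Lemma shrink_good K B : good K -> good (shrink K B) /\ subs (shrink K B) K.
Proof.
  intro HK. unfold shrink. destruct excluded_middle_informative as [h|h].
  - destruct (constructive_indefinite_description _ h) as [A [H1 [H2 H3]]]. simpl. auto.
  - split; [auto|]. intros y Hy; auto.
Qed.

Lemma shrink_disj K B : (exists A, good A /\ subs A K /\ forall y, A y -> ~ B y) ->
  forall y, shrink K B y -> ~ B y.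
Proof.
  intros h0. unfold shrink. destruct excluded_middle_informative as [h|h]; [|contradiction].
  destruct (constructive_indefinite_description _ h) as [A [H1 [H2 H3]]]. simpl. auto.
Qed.

Fixpoint foldS (r : R) (K : X -> Prop) (l : list X) : X -> Prop :=
  match l with
  | nil => K
  | c :: l => foldS r (shrink K (fun y => d c y < r)) l
  end.

Lemma foldS_good r l : forall K, good K -> good (foldS r K l) /\ subs (foldS r K l) K.
Proof.
  induction l as [|c l IH]; intros K HK; simpl.
  - split; auto. intros y; auto.
  - destruct (shrink_good K (fun y => d c y < r) HK) as [H1 H2].
    destruct (IH _ H1) as [H3 H4]. split; auto. intros y Hy; auto.
Qed.

Lemma foldS_key r l : forall K c A, In c l -> good K -> good A -> subs A (foldS r K l) ->
  (forall y, A y -> ~ d c y < r) -> forall y, foldS r K l y -> ~ d c y < r.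
Proof.
  induction l as [|c0 l IH]; intros K c A Hin HK HA HAs HAd y Hy; simpl in *; [contradiction|].
  destruct (shrink_good K (fun y => d c0 y < r) HK) as [H1 H2].
  destruct (foldS_good r l _ H1) as [H3 H4].
  destruct Hin as [<-|Hin].
  - apply (shrink_disj K (fun y => d c0 y < r)).
    + exists A. split; auto. split; auto. intros z Hz. apply H2, H4, HAs, Hz.
    + apply H4. auto.
  - exact (IH _ c A Hin H1 HA HAs HAd y Hy).
Qed.

Fixpoint Kseq (nets : nat -> list X) (K : X -> Prop) (m : nat) : X -> Prop :=
  match m with
  | O => K
  | S m => foldS (/ (INR m + 1)) (Kseq nets K m) (nets m)
  end.

Lemma exists_minimal K : good K ->
  exists M, good M /\ subs M K /\ forall A, good A -> subs A M -> subs M A.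
Proof.
  intro HK.
  assert (Hn : forall m : nat, exists l : list X, forall y, exists c, In c l /\ d c y < / (INR m + 1)).
  { intro m. apply (Hcpt X (fun c y => d c y < / (INR m + 1))).
    - intro c. apply ball_open. auto.
    - intro x. exists x. rewrite (d_xx d Hmet). apply inv_pos. }
  apply my_choice in Hn. destruct Hn as [nets Hnets].
  set (Ks := Kseq nets K).
  assert (HKs : forall m, good (Ks m)).
  { induction m; simpl; auto. apply foldS_good. auto. }
  assert (Hdec1 : forall m, subs (Ks (S m)) (Ks m)).
  { intro m. apply foldS_good. auto. }
  assert (Hdec : forall m n, (m <= n)%nat -> subs (Ks n) (Ks m)).
  { intros m n H. induction H; intros y Hy; auto. apply IHle. apply Hdec1. auto. }
  set (M := fun y => forall m, Ks m y).
  exists M. split; [split; [|split]|split].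
  - assert (Ha : forall m, exists y, Ks m y) by (intro m; apply HKs).
    apply my_choice in Ha. destruct Ha as [a Ha].
    destruct (cluster_exists d Hmet Hcpt a) as [w Hw]. exists w. intro m.
    apply (closed_cluster d Hmet (Ks m) a w m); [apply HKs|auto|]. intros n Hn. apply (Hdec m n Hn). auto.
  - intros x Hx. apply not_all_ex_not in Hx. destruct Hx as [m Hm].
    destruct (proj1 (proj2 (HKs m)) x Hm) as [r [Hr H]]. exists r. split; auto.
    intros y Hy HM. apply (H y Hy). apply HM.
  - intros y Hy m. apply HKs. auto.
  - intros y Hy. apply (Hy 0%nat).
  - intros A HA HAM y Hy. apply NNPP. intro HnA.
    destruct (proj1 (proj2 HA) y HnA) as [r0 [Hr0 H0]].
    destruct (inv_small (r0/2) ltac:(lra)) as [m Hm]. specialize (Hm m (le_n m)).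
    destruct (Hnets m y) as [c [Hc Hcy]].
    apply (foldS_key (/ (INR m + 1)) (nets m) (Ks m) c A Hc (HKs m) HA) with (y := y).
    + intros z Hz. apply (HAM z Hz (S m)).
    + intros z Hz Hcz. apply (H0 z); auto. pose proof (d_tri d Hmet y c z).
      rewrite (d_sym d Hmet y c) in H. lra.
    + apply (Hy (S m)).
    + auto.
Qed.

End Minimal.

Lemma fin_min (D : nat -> nat -> R) p :
  (forall r, (r < p)%nat -> exists e, 0 < e /\ forall j, e <= D r j) ->
  exists e, 0 < e /\ forall r, (r < p)%nat -> forall j, e <= D r j.
Proof.
  induction p as [|p IH]; intros H.
  - exists 1. split; [lra|]. intros; lia.
  - destruct IH as [e1 [He1 H1]]. { intros r Hr. apply H. lia. }
    destruct (H p ltac:(lia)) as [e2 [He2 H2]].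
    exists (Rmin e1 e2). split; [apply Rmin_glb_lt; auto|].
    intros r Hr j. destruct (Nat.eq_dec r p) as [->|Hne].
    + eapply Rle_trans; [apply Rmin_r|auto].
    + eapply Rle_trans; [apply Rmin_l|]. apply H1. lia.
Qed.

Section Main.
Context {X : Type} (d : X -> X -> R) (f : X -> X) (Hmet : is_metric d)
  (Hcpt : compact_space d) (Hcont : continuous_map d f) (Hls : limit_shadowing d f).

Lemma good_iter M n y : good d f M -> M y -> M (Nat.iter n f y).
Proof. intros HM Hy. induction n; simpl; auto. apply HM. auto. Qed.

Lemma min_set_point M v : good d f M -> (forall A, good d f A -> subs A M -> subs M A) -> M v ->
  minimal_point d f v.
Proof.
  intros HM Hmin Hv A [y Hy] HAc HAs HAi z Hz.
  assert (HOC : subs (orbit_closure d f v) M).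
  { intros w Hw. apply (closed_closure d M w (proj1 (proj2 HM))).
    intros eps He. destruct (Hw eps He) as [t [[n ->] Ht]]. exists (Nat.iter n f v).
    split; auto. apply good_iter; auto. }
  apply (Hmin A); [split; [exists y; auto|split; auto]| |]; auto.
  intros t Ht. apply HOC, HAs, Ht.
Qed.

Lemma orbit_good z : good d f (orbit_closure d f z).
Proof.
  split; [|split].
  - exists z. intros eps He. exists z. split; [exists 0%nat; auto|]. rewrite (d_xx d Hmet). auto.
  - apply closure_closed; auto.
  - intros y Hy eps He. destruct (Hcont y eps He) as [rho [Hrho Hc]].
    destruct (Hy rho Hrho) as [w [[n ->] Hw]]. exists (Nat.iter (S n) f z).
    split; [exists (S n); auto|]. simpl. apply Hc. auto.
Qed.

Lemma nw_min x : nonwandering d f x -> closure d (minimal_point d f) x.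
Proof.
  intros Hnw eps He.
  destruct (per_shadow d f Hmet Hcpt Hcont Hls (eps/2) ltac:(lra)) as [del [Hdel HT]].
  destruct (nw_cr d f Hmet Hcont x Hnw del Hdel) as [p [w [Hp [Hw0 [Hwp Hch]]]]].
  destruct (HT w p Hp ltac:(congruence) Hch) as [z Hz].
  assert (HB : forall j, d x (Nat.iter (j * p) f z) <= eps / 2).
  { intro j. rewrite <- Hw0 at 1. rewrite <- (cyc_mult w p j Hp). apply Hz. }
  destruct (exists_minimal d f Hmet Hcpt _ (orbit_good z)) as [M [HM [HMK Hmin]]].
  destruct HM as [[u Hu] HMr].
  assert (Hr : exists r, (r < p)%nat /\ forall e, 0 < e -> exists j, d u (Nat.iter (j * p + r) f z) < e).
  { apply NNPP. intro Hno.
    destruct (fin_min (fun r j => d u (Nat.iter (j * p + r) f z)) p) as [e [He' H]].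
    { intros r Hr. apply NNPP. intro Hn. apply Hno. exists r. split; auto. intros e He'.
      apply NNPP. intro Hj. apply Hn. exists e. split; auto. intro j. apply Rnot_lt_le.
      intro Hl. apply Hj. exists j. auto. }
    destruct (HMK u Hu e He') as [y [[n ->] Hy]].
    pose proof (Nat.div_mod_eq n p). pose proof (Nat.mod_upper_bound n p ltac:(lia)).
    specialize (H (n mod p)%nat H1 (n / p)%nat). simpl in H.
    replace (n / p * p + n mod p)%nat with n in H by lia. lra. }
  destruct Hr as [r [Hrp Hr]].
  set (v := Nat.iter (p - r) f u).
  exists v. split.
  - apply (min_set_point M v); [split; [exists u; auto|auto]|auto|]. apply good_iter; auto.
    split; [exists u; auto|auto].
  - assert (d x v <= eps / 2).
    { apply Rnot_lt_le. intro Hl. set (e := d x v - eps / 2).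
      destruct (iter_cont d f Hcont (p - r) u e ltac:(unfold e; lra)) as [rho [Hrho Hc]].
      destruct (Hr rho Hrho) as [j Hj]. specialize (Hc _ Hj).
      rewrite <- Nat.iter_add in Hc. replace (p - r + (j * p + r))%nat with (S j * p)%nat in Hc by nia.
      specialize (HB (S j)). pose proof (d_tri d Hmet x (Nat.iter (S j * p) f z) v).
      rewrite (d_sym d Hmet (Nat.iter (S j * p) f z) v) in H. fold v in Hc. unfold e in Hc. lra. }
    lra.
Qed.

Definition reach (e : R) (a b : X) : Prop :=
  exists k w, w 0%nat = a /\ w k = b /\ cchain d f e w k.

Definition app (w1 : nat -> X) (k1 : nat) (w2 : nat -> X) (i : nat) : X :=
  if Nat.leb i k1 then w1 i else w2 (i - k1)%nat.

Lemma app_left w1 k1 w2 i : (i <= k1)%nat -> app w1 k1 w2 i = w1 i.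
Proof. intro H. unfold app. apply Nat.leb_le in H. rewrite H. auto. Qed.

Lemma app_right w1 k1 w2 i : w1 k1 = w2 0%nat -> (k1 <= i)%nat -> app w1 k1 w2 i = w2 (i - k1)%nat.
Proof.
  intros H1 H. unfold app. destruct (Nat.leb i k1) eqn:E; auto.
  apply Nat.leb_le in E. replace i with k1 by lia. rewrite Nat.sub_diag. auto.
Qed.

Lemma chain_app e w1 k1 w2 k2 : cchain d f e w1 k1 -> cchain d f e w2 k2 -> w1 k1 = w2 0%nat ->
  cchain d f e (app w1 k1 w2) (k1 + k2).
Proof.
  intros H1 H2 H12 i Hi. destruct (Nat.lt_ge_cases i k1).
  - rewrite !app_left by lia. auto.
  - rewrite !app_right by (auto; lia). replace (S i - k1)%nat with (S (i - k1)) by lia. apply H2. lia.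
Qed.

Lemma reach_trans e a b c : reach e a b -> reach e b c -> reach e a c.
Proof.
  intros [k1 [w1 [A1 [B1 C1]]]] [k2 [w2 [A2 [B2 C2]]]].
  exists (k1 + k2)%nat, (app w1 k1 w2). split; [|split].
  - rewrite app_left by lia. auto.
  - rewrite app_right by (congruence || lia). replace (k1 + k2 - k1)%nat with k2 by lia. auto.
  - apply chain_app; auto. congruence.
Qed.

Lemma shadow_nw : shadowing_on d f (nonwandering d f).
Proof.
  intros eps He.
  destruct (per_shadow d f Hmet Hcpt Hcont Hls eps He) as [eta [Heta HT]].
  destruct (unif_cont d f Hmet Hcpt Hcont (eta/2) ltac:(lra)) as [rho [Hrho Hu]].
  set (del := Rmin eta (rho/4)).
  assert (Hdel : 0 < del /\ del <= eta /\ del <= rho / 4).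
  { unfold del. split; [apply Rmin_glb_lt; lra|split; [apply Rmin_l|apply Rmin_r]]. }
  exists del. split; [tauto|]. intros xs Hxs Hpo.
  assert (Hback : forall i, reach eta (xs (S i)) (xs i)).
  { intro i. set (et := Rmin (eta/2) (rho/4)).
    assert (Het : 0 < et /\ et <= eta / 2 /\ et <= rho / 4).
    { unfold et. split; [apply Rmin_glb_lt; lra|split; [apply Rmin_l|apply Rmin_r]]. }
    destruct (nw_cr d f Hmet Hcont _ (Hxs i) et (proj1 Het)) as [k [w [Hk [Hw0 [Hwk Hch]]]]].
    assert (Hw1 : d (f (xs (S i))) (f (w 1%nat)) < eta / 2).
    { apply Hu. pose proof (Hpo i). pose proof (Hch 0%nat ltac:(lia)). rewrite Hw0 in H0.
      pose proof (d_tri d Hmet (xs (S i)) (f (xs i)) (w 1%nat)). rewrite (d_sym d Hmet (xs (S i)) (f (xs i))) in H1. lra. }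
    destruct (Nat.eq_dec k 1) as [->|Hk2].
    - exists 1%nat, (fun j => if Nat.eqb j 0 then xs (S i) else xs i). split; [auto|split; [auto|]].
      intros j Hj. replace j with 0%nat by lia. simpl.
      pose proof (Hch 0%nat ltac:(lia)). rewrite Hw0, Hwk in H. rewrite Hwk in Hw1.
      pose proof (d_tri d Hmet (f (xs (S i))) (f (xs i)) (xs i)). lra.
    - exists (k - 1)%nat, (fun j => if Nat.eqb j 0 then xs (S i) else w (S j)). split; [auto|split].
      + destruct (Nat.eqb (k - 1) 0) eqn:E; [apply Nat.eqb_eq in E; lia|].
        replace (S (k - 1)) with k by lia. auto.
      + intros j Hj. destruct (Nat.eqb j 0) eqn:E.
        * apply Nat.eqb_eq in E. subst j. simpl. pose proof (Hch 1%nat ltac:(lia)).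
          pose proof (d_tri d Hmet (f (xs (S i))) (f (w 1%nat)) (w 2%nat)). lra.
        * assert (ES : Nat.eqb (S j) 0 = false) by reflexivity. rewrite ES.
          pose proof (Hch (S j) ltac:(lia)). lra. }
  assert (Hall : forall n, reach eta (xs n) (xs 0%nat)).
  { induction n.
    - exists 0%nat, (fun _ => xs 0%nat). split; [auto|split; [auto|]]. intros j Hj; lia.
    - eapply reach_trans; eauto. }
  assert (HN : forall N, exists w, nonwandering d f w /\
     forall o, (o <= N)%nat -> d (xs o) (Nat.iter o f w) <= eps).
  { intro N. destruct (Hall (S N)) as [k2 [w2 [A2 [B2 C2]]]].
    set (c := app xs (S N) w2). set (p := (S N + k2)%nat).
    assert (Hch : cchain d f eta c p).
    { apply chain_app; auto. intros i Hi. pose proof (Hpo i). lra. }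
    assert (Hcp : c p = c 0%nat).
    { unfold c, p. rewrite app_right by (auto; lia). rewrite app_left by lia.
      replace (S N + k2 - S N)%nat with k2 by lia. auto. }
    destruct (HT c p ltac:(unfold p; lia) Hcp Hch) as [z Hz].
    destruct (cluster_exists d Hmet Hcpt (fun j => Nat.iter (j * p) f z)) as [w Hw].
    exists w. split.
    - intros U HU Uw. destruct (HU w Uw) as [r [Hr Hball]].
      destruct (Hw r Hr 0%nat) as [j1 [_ Hj1]].
      destruct (Hw r Hr (S j1)) as [j2 [Hj2 Hj2']].
      exists ((j2 - j1) * p)%nat, (Nat.iter (j1 * p) f z). split; [unfold p; nia|].
      split; [apply Hball; rewrite (d_sym d Hmet); auto|].
      rewrite <- Nat.iter_add. replace ((j2 - j1) * p + j1 * p)%nat with (j2 * p)%nat by nia.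
      apply Hball. rewrite (d_sym d Hmet). auto.
    - intros o Ho.
      apply (cluster_limit d Hmet _ w (Nat.iter o f) (xs o) eps 0%nat Hw).
      + intros e He'. apply (iter_cont d f Hcont o w e He').
      + intros j _. rewrite <- Nat.iter_add.
        assert (cyc c p (j * p + o) = xs o).
        { rewrite cyc_at by (unfold p; lia). unfold c. apply app_left. lia. }
        rewrite <- H, Nat.add_comm. apply Hz. }
  apply my_choice in HN. destruct HN as [ws Hws].
  destruct (cluster_exists d Hmet Hcpt ws) as [w Hw].
  exists w. split.
  - intros U HU Uw. destruct (HU w Uw) as [r [Hr Hball]].
    destruct (Hw r Hr 0%nat) as [N [_ HN]].
    apply (proj1 (Hws N)); auto. apply Hball. rewrite (d_sym d Hmet). auto.
  - intro o. apply (cluster_limit d Hmet ws w (Nat.iter o f) (xs o) eps o Hw).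
    + intros e He'. apply (iter_cont d f Hcont o w e He').
    + intros N HN. apply (proj2 (Hws N)). auto.
Qed.

End Main.

Theorem theorem1p1 (X : Type) (d : X -> X -> R) (f : X -> X)
  (Hmet : is_metric d) (Hcpt : compact_space d) (Hcont : continuous_map d f)
  (Hls : limit_shadowing d f) :
  (forall x, chain_recurrent d f x <-> nonwandering d f x) /\
  (forall x, nonwandering d f x <-> closure d (minimal_point d f) x) /\
  shadowing_on d f (nonwandering d f).
Proof.
  split; [|split].
  - intro x. split; [apply (cr_nw d f Hmet Hls)|apply (nw_cr d f Hmet Hcont)].
  - intro x. split; [apply (nw_min d f Hmet Hcpt Hcont Hls)|].
    intro Hx. apply (nw_closure d f). intros eps He. destruct (Hx eps He) as [y [Hy Hxy]].
    exists y. split; auto. apply (min_nw d f Hmet Hcont). auto.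
  - apply (shadow_nw d f Hmet Hcpt Hcont Hls).
Qed.
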